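(* The function $\kappa\mapsto\Gamma(\kappa,0)$ does not vanish on $(0,\infty)\setminus I_*$, where $I_*:=(0.380337,\,0.380338)$.
   Context: For each $\kappa>0$, $\Gamma(\kappa,0):=\lim_{\ell\to0}\Gamma_\ell$ is the value at $\ell=0$ of the analytic extension of $\ell\mapsto\Gamma_\ell$, where $\Gamma_\ell$ (small $\ell\ne0$) is defined as follows. Set $T:=2\pi/\kappa$, $\mu_0:=\kappa/\tanh(\kappa)$, $H^s_{\rm per}:=H^s(\mathbb R/T\mathbb Z)$. For a sufficiently regular $\eta$ with $1+\eta>0$, $G[1+\eta]\psi:=(\partial_z\phi-\nabla\eta\cdot\nabla\phi)|_{z=1+\eta}$, $\nabla=(\partial_x,\partial_y)$, where $\phi$ is the bounded solution of $\Delta_{x,y,z}\phi=0$ in $\{0<z<1+\eta(x,y)\}$, $\partial_z\phi(\cdot,\cdot,0)=0$, $\phi|_{z=1+\eta}=\psi$. Let $\varepsilon\mapsto(\underline\eta_\varepsilon,\underline\psi_\varepsilon,\underline\mu_\varepsilon)$ be the analytic family of small-amplitude $T$-periodic Stokes waves: the unique solution of $\underline\eta'+G[1+\underline\eta]\underline\psi=0$, $\underline\psi'-\underline\mu\,\underline\eta=\frac12(\underline\psi')^2-\frac12\frac{(G[1+\underline\eta]\underline\psi+\underline\eta'\underline\psi')^2}{1+(\underline\eta')^2}$ with $\|(\underline\eta,\underline\psi)-\varepsilon(\sinh(\kappa)\cos(\kappa\cdot),\cosh(\kappa)\sin(\kappa\cdot))\|_{H^{s_0}_{\rm per}}+|\underline\mu-\mu_0|\le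 K_0\varepsilon^2$. Set $\underline B_\varepsilon:=\frac{\underline\psi_\varepsilon'-1}{1+(\underline\eta_\varepsilon')^2}\underline\eta_\varepsilon'$, $\underline V_\varepsilon:=\underline\psi'_\varepsilon-\underline B_\varepsilon\underline\eta_\varepsilon'$, $\underline a_\varepsilon:=\underline\mu_\varepsilon-\mu_0-(1-\underline V_\varepsilon)\underline B_\varepsilon'$, $G_{\ell,\xi}[1+\underline\eta_\varepsilon]\psi(x):=e^{-i\xi x-i\ell y}G[1+\underline\eta_\varepsilon]\big((x',y')\mapsto e^{i\xi x'+i\ell y'}\psi(x')\big)(x,y)$ and $L^\varepsilon_{\ell,\xi}:=\begin{pmatrix}(\partial_x+i\xi)((1-\underline V_\varepsilon)\,\cdot\,) & G_{\ell,\xi}[1+\underline\eta_\varepsilon]\\ -(\mu_0+\underline a_\varepsilon) & (1-\underline V_\varepsilon)(\partial_x+i\xi)\end{pmatrix}$ on $L^2_{\rm per}\times H^{1/2}_{\rm per}$. Let $F$ be the odd analytic function with $F(r)=\sqrt{r\tanh r}$ for $r\ge0$, $|n\kappa|_{\ell,\xi}:=\sqrt{(n\kappa+\xi)^2+\ell^2}$, $\lambda^\pm_{n,\ell,\xi}:=i(n\kappa+\xi\pm\sqrt{\mu_0}F(|n\kappa|_{\ell,\xi}))$, and $\xi_+$ the odd analytic function near $0$ with $\xi_+'(0)>0$ and $\lambda^-_{1,\ell,\xi_+(\ell)}=\lambda^+_{-1,\ell,\xi_+(\ell)}=:i\sigma_+(\ell)$. For small $\ell\ne0$ and $|(\varepsilon,\xi-\xi_+(\ell))|\le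 c_0'|\ell|$, $L^\varepsilon_{\ell,\xi}$ has exactly two eigenvalues in $B(i\sigma_+(\ell),c_0|\ell|)$ (for suitable $c_0,c_0'>0$); let $\Pi_{\ell,\xi}(\varepsilon)$ be the associated Riesz projector and $\mathcal U_{\ell,\xi}(\varepsilon)$ the solution of $\partial_\varepsilon\mathcal U_{\ell,\xi}=[\partial_\varepsilon\Pi_{\ell,\xi},\Pi_{\ell,\xi}]\mathcal U_{\ell,\xi}$, $\mathcal U_{\ell,\xi}(0)=I$. Set $\alpha_\pm(\ell,\xi):=F(|\mp\kappa|_{\ell,\xi})/\sqrt{\mu_0}$, $q_-^0(\ell,\xi,x):=e^{i\kappa x}(i\alpha_-(\ell,\xi),1)^T$, $q_+^0(\ell,\xi,x):=e^{-i\kappa x}(-i\alpha_+(\ell,\xi),1)^T$, $q_\pm^\varepsilon:=\mathcal U_{\ell,\xi}(\varepsilon)q_\pm^0$, $J:=\begin{pmatrix}0&-1\\1&0\end{pmatrix}$, $A^\varepsilon_{\ell,\xi}:=J^{-1}L^\varepsilon_{\ell,\xi}$, $\langle f,g\rangle:=\frac1T\int_0^T\overline{f(x)}\cdot g(x)\,dx$, $a(\ell,\xi,\varepsilon):=\langle q_+^\varepsilon,A^\varepsilon_{\ell,\xi}q_-^\varepsilon\rangle$, $\Gamma_\ell:=\frac12\partial_\varepsilon^2a(\ell,\xi_+(\ell),0)$. (Explicitly, with $s=\sinh\kappa$, $c=\cosh\kappa$, $\Gamma(\kappa,0)=\frac{\kappa^3}{8csD(\kappa)}\big(\kappa^3(64s^8+144s^6+144s^4+94s^2+9)-\kappa^2cs(24s^4+40s^2+27)+\kappa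 s^2(1+s^2)(48s^6+40s^4+2s^2+27)-cs^3(1+s^2)(40s^4+56s^2+9)\big)$ with $D(\kappa)=\kappa^3(8s^4+10s^2+1)-3\kappa^2cs+3\kappa s^2(1+s^2)(2s^2+1)-cs^3(1+s^2)$.) *)

(* Defs.v *)
From Stdlib Require Import Reals.
Open Scope R_scope.

Definition Dk (k : R) : R :=
  let s := sinh k in let c := cosh k in
  k^3 * (8*s^4 + 10*s^2 + 1) - 3*k^2*c*s
  + 3*k*s^2*(1+s^2)*(2*s^2+1) - c*s^3*(1+s^2).

Definition Gamma0 (k : R) : R :=
  let s := sinh k in let c := cosh k in
  k^3 / (8*c*s*Dk k) *
  ( k^3 * (64*s^8 + 144*s^6 + 144*s^4 + 94*s^2 + 9)
    - k^2*c*s*(24*s^4 + 40*s^2 + 27)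
    + k*s^2*(1+s^2)*(48*s^6 + 40*s^4 + 2*s^2 + 27)
    - c*s^3*(1+s^2)*(40*s^4 + 56*s^2 + 9) ).

(* Main.v *)
Require Import Defs.
From Coquelicot Require Import Coquelicot.
From Stdlib Require Import Reals Lra Lia List ZArith.
Import ListNotations.
Open Scope R_scope.

Fixpoint Rfact (n:nat) : R := match n with 0%nat => 1 | S m => Rfact m * (INR m + 1) end.

Lemma Rfact_INR n : INR (Factorial.fact n) = Rfact n.
Proof. induction n as [|n IH]; [reflexivity|].
 change (Factorial.fact (S n)) with (S n * Factorial.fact n)%nat. rewrite mult_INR, IH, S_INR. simpl; ring. Qed.

Lemma Rfact_pos n : 0 < Rfact n.
Proof. rewrite <- Rfact_INR. apply lt_0_INR, Factorial.lt_O_fact. Qed.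

Definition tc (i:nat) (lam:R) (n:nat) : R :=
  if Nat.leb i n then lam^(n-i) / Rfact (n-i) else 0.

Lemma scalR (a b : R) : scal a b = a * b.
Proof. reflexivity. Qed.

Lemma term_series i lam k : is_pseries (tc i lam) k (k^i * exp (lam*k)).
Proof.
  pose proof (is_exp_Reals (lam*k)) as H.
  assert (H1: is_pseries (fun n => lam^n / Rfact n) k (exp (lam*k))).
  { unfold is_pseries in *. eapply is_series_ext; [|exact H].
    intro n. unfold scal; simpl; unfold mult; simpl. rewrite !pow_n_pow, Rfact_INR, Rpow_mult_distr. unfold Rdiv. replace (pow_n k n) with (k^n) by (symmetry; apply pow_n_pow). ring. }
  pose proof (is_pseries_incr_n _ i _ _ H1) as H2.
  rewrite scalR, pow_n_pow in H2.
  eapply is_pseries_ext; [|exact H2].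
  intro n. rewrite PS_incr_n_simplify. unfold tc.
  destruct (Compare_dec.le_lt_dec i n) as [h|h].
  - replace (Nat.leb i n) with true; [reflexivity|symmetry; apply Nat.leb_le; exact h].
  - replace (Nat.leb i n) with false; [reflexivity|symmetry; apply Nat.leb_gt; exact h].
Qed.

Definition F (l : list (R*nat*R)) (k:R) : R :=
  fold_right (fun t acc => let '(c,i,lam) := t in c * (k^i * exp (lam*k)) + acc) 0 l.
Definition coef (l : list (R*nat*R)) (n:nat) : R :=
  fold_right (fun t acc => let '(c,i,lam) := t in c * tc i lam n + acc) 0 l.

Lemma coef_series l k : is_pseries (coef l) k (F l k).
Proof.
  induction l as [|[[c i] lam] l IH].
  - pose proof (is_pseries_scal 0 _ _ _ (Rmult_comm k 0) (term_series 0 0 k)) as H.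
    rewrite scalR, Rmult_0_l in H. eapply is_pseries_ext; [|exact H].
    intro n; unfold PS_scal; rewrite scalR; simpl; ring.
  - pose proof (is_pseries_plus _ _ _ _ _ (is_pseries_scal c _ _ _ (Rmult_comm k c) (term_series i lam k)) IH) as H.
    eapply is_pseries_ext; [|exact H]. intro n. reflexivity.
Qed.
Definition Nlist : list (R*nat*R) :=
  [((5/128), 0%nat, (-10));
  ((3/64), 1%nat, (-10));
  ((1/16), 0%nat, (-8));
  ((-1/8), 1%nat, (-8));
  ((1/4), 3%nat, (-8));
  ((-23/128), 0%nat, (-6));
  ((1/64), 1%nat, (-6));
  ((3/8), 2%nat, (-6));
  ((1/4), 3%nat, (-6));
  ((-1/8), 0%nat, (-4));
  ((15/8), 1%nat, (-4));
  ((1), 2%nat, (-4));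
  ((5/2), 3%nat, (-4));
  ((11/32), 0%nat, (-2));
  ((-1/16), 1%nat, (-2));
  ((29/8), 2%nat, (-2));
  ((29/4), 3%nat, (-2));
  ((-7/2), 1%nat, (0));
  ((-23/2), 3%nat, (0));
  ((-11/32), 0%nat, (2));
  ((-1/16), 1%nat, (2));
  ((-29/8), 2%nat, (2));
  ((29/4), 3%nat, (2));
  ((1/8), 0%nat, (4));
  ((15/8), 1%nat, (4));
  ((-1), 2%nat, (4));
  ((5/2), 3%nat, (4));
  ((23/128), 0%nat, (6));
  ((1/64), 1%nat, (6));
  ((-3/8), 2%nat, (6));
  ((1/4), 3%nat, (6));
  ((-1/16), 0%nat, (8));
  ((-1/8), 1%nat, (8));
  ((1/4), 3%nat, (8));
  ((-5/128), 0%nat, (10));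
  ((3/64), 1%nat, (10));
  ((16), 7%nat, (0))].
Definition Dlist : list (R*nat*R) :=
  [((1/64), 0%nat, (-6));
  ((3/32), 1%nat, (-6));
  ((1/2), 3%nat, (-4));
  ((-3/64), 0%nat, (-2));
  ((-3/32), 1%nat, (-2));
  ((3/4), 2%nat, (-2));
  ((1/2), 3%nat, (-2));
  ((-1), 3%nat, (0));
  ((3/64), 0%nat, (2));
  ((-3/32), 1%nat, (2));
  ((-3/4), 2%nat, (2));
  ((1/2), 3%nat, (2));
  ((1/2), 3%nat, (4));
  ((-1/64), 0%nat, (6));
  ((3/32), 1%nat, (6))].
Ltac norm_pos := repeat match goal with |- context[Pos.to_nat ?p] => let v := eval compute in (Pos.to_nat p) in change (Pos.to_nat p) with v end.

Lemma exp_nat n k : exp (INR n * k) = exp k ^ n.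
Proof. induction n as [|n IH]. simpl. rewrite Rmult_0_l, exp_0; reflexivity.
 rewrite S_INR, Rmult_plus_distr_r, exp_plus, IH, Rmult_1_l. simpl. ring. Qed.

Lemma exp_posl p k : exp (IZR (Zpos p) * k) = exp k ^ Pos.to_nat p.
Proof. rewrite <- exp_nat, INR_IZR_INZ, positive_nat_Z. reflexivity. Qed.

Lemma exp_negl p k : exp (IZR (Zneg p) * k) = / exp k ^ Pos.to_nat p.
Proof. rewrite <- exp_posl, <- exp_Ropp. f_equal. change (IZR (Zneg p)) with (- IZR (Zpos p)). ring. Qed.

Lemma exp_0l k : exp (0 * k) = 1.
Proof. rewrite Rmult_0_l; apply exp_0. Qed.

Definition Nk (k : R) : R :=
  let s := sinh k in let c := cosh k in
  ( k^3 * (64*s^8 + 144*s^6 + 144*s^4 + 94*s^2 + 9)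
    - k^2*c*s*(24*s^4 + 40*s^2 + 27)
    + k*s^2*(1+s^2)*(48*s^6 + 40*s^4 + 2*s^2 + 27)
    - c*s^3*(1+s^2)*(40*s^4 + 56*s^2 + 9) ).

Lemma F_N k : F Nlist k = Nk k + 16 * k^7.
Proof.
  unfold F, Nlist, Nk, sinh, cosh. cbn [fold_right].
  rewrite ?exp_posl, ?exp_negl, ?exp_0l. rewrite exp_Ropp. cbv zeta; norm_pos.
  assert (exp k <> 0) by (apply Rgt_not_eq, exp_pos). field. auto.
Qed.

Lemma F_D k : F Dlist k = Dk k.
Proof.
  unfold F, Dlist, Dk, sinh, cosh. cbn [fold_right].
  rewrite ?exp_posl, ?exp_negl, ?exp_0l. rewrite exp_Ropp. cbv zeta; norm_pos.
  assert (exp k <> 0) by (apply Rgt_not_eq, exp_pos). field. auto.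
Qed.
Definition Nnum (p:nat) (x:R) : R := (2^2)^p * ((400256)*x^0 + (161440)*x^1 + (21344)*x^2 + (928)*x^3) + (4^2)^p * ((10240000)*x^0 + (3600384)*x^1 + (458752)*x^2 + (20480)*x^3) + (6^2)^p * ((734832)*x^0 + (938952)*x^1 + (349920)*x^2 + (23328)*x^3) + (8^2)^p * ((11534336)*x^0 + (20840448)*x^1 + (3145728)*x^2 + (131072)*x^3) + (10^2)^p * ((6250000)*x^0 + (9375000)*x^1).
Definition Nden (p:nat) (x:R) : R := Rfact (2*p) * (x+1) * (x+2) * (x+3) * (x+4) * (x+5) * (x+6) * (x+7) * (x+8) * (x+9).
Definition Dnum (p:nat) (x:R) : R := (2^2)^p * ((-12)*x^0 + (77)*x^1 + (36)*x^2 + (4)*x^3) + (4^2)^p * ((960)*x^0 + (752)*x^1 + (192)*x^2 + (16)*x^3) + (6^2)^p * ((972)*x^0 + (243)*x^1).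
Definition Dden (p:nat) (x:R) : R := Rfact (2*p) * (x+1) * (x+2) * (x+3) * (x+4) * (x+5).
Lemma negsq (q : positive) (p : nat) : ((IZR (Zneg q))^2)^p = ((IZR (Zpos q))^2)^p.
Proof. f_equal. change (IZR (Zneg q)) with (- IZR (Zpos q)). ring. Qed.


Lemma coefN_odd p : coef Nlist (9 + 2*p) = Nnum p (INR (2*p)) / Nden p (INR (2*p)).
Proof.
  remember (2*p)%nat as m.
  unfold coef, Nlist. cbn [fold_right]. unfold tc. cbn [Nat.add Nat.leb Nat.sub pow Rfact].
  rewrite ?S_INR. subst m. rewrite !pow_mult, ?negsq. unfold Nnum, Nden.
  assert (0 < Rfact (2*p)) by apply Rfact_pos. pose proof (pos_INR (2*p)).
  field. repeat split; apply Rgt_not_eq; lra.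
Qed.

Lemma coefN_even p : coef Nlist (10 + 2*p) = 0.
Proof.
  remember (2*p)%nat as m.
  unfold coef, Nlist. cbn [fold_right]. unfold tc. cbn [Nat.add Nat.leb Nat.sub pow Rfact].
  rewrite ?S_INR. subst m. rewrite !pow_mult, ?negsq.
  assert (0 < Rfact (2*p)) by apply Rfact_pos. pose proof (pos_INR (2*p)).
  field. repeat split; apply Rgt_not_eq; lra.
Qed.

Lemma coefD_odd p : coef Dlist (5 + 2*p) = Dnum p (INR (2*p)) / Dden p (INR (2*p)).
Proof.
  remember (2*p)%nat as m.
  unfold coef, Dlist. cbn [fold_right]. unfold tc. cbn [Nat.add Nat.leb Nat.sub pow Rfact].
  rewrite ?S_INR. subst m. rewrite !pow_mult, ?negsq. unfold Dnum, Dden.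
  assert (0 < Rfact (2*p)) by apply Rfact_pos. pose proof (pos_INR (2*p)).
  field. repeat split; apply Rgt_not_eq; lra.
Qed.

Lemma coefD_even p : coef Dlist (6 + 2*p) = 0.
Proof.
  remember (2*p)%nat as m.
  unfold coef, Dlist. cbn [fold_right]. unfold tc. cbn [Nat.add Nat.leb Nat.sub pow Rfact].
  rewrite ?S_INR. subst m. rewrite !pow_mult, ?negsq.
  assert (0 < Rfact (2*p)) by apply Rfact_pos. pose proof (pos_INR (2*p)).
  field. repeat split; apply Rgt_not_eq; lra.
Qed.

Ltac concrete_coef := cbn [fold_right tc Nat.leb Nat.sub pow Rfact INR]; field.

Lemma coefN_small n : (n <= 8)%nat -> coef Nlist n = 0.
Proof.
  intro H. unfold coef, Nlist.
  do 9 (destruct n as [|n]; [concrete_coef|]). lia.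
Qed.

Lemma coefD_small n : (n <= 4)%nat -> coef Dlist n = 0.
Proof.
  intro H. unfold coef, Dlist.
  do 5 (destruct n as [|n]; [concrete_coef|]). lia.
Qed.

Lemma parity9 n k : (k <= n)%nat -> exists p, n = (k + 2*p)%nat \/ n = (S k + 2*p)%nat.
Proof.
  intro H. destruct (Nat.Even_or_Odd (n - k)) as [[p Hp]|[p Hp]]; exists p; lia.
Qed.

Ltac posi := repeat (apply Rplus_le_le_0_compat || apply Rmult_le_pos); try lra; try (apply pow_le; lra).

Lemma Nnum_pos p x : 0 <= x -> 0 <= Nnum p x.
Proof. intro Hx. unfold Nnum. posi. Qed.

Lemma Nden_pos p : 0 < Nden p (INR (2*p)).
Proof. unfold Nden. pose proof (Rfact_pos (2*p)). pose proof (pos_INR (2*p)).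
  repeat apply Rmult_lt_0_compat; lra. Qed.

Lemma Dden_pos p : 0 < Dden p (INR (2*p)).
Proof. unfold Dden. pose proof (Rfact_pos (2*p)). pose proof (pos_INR (2*p)).
  repeat apply Rmult_lt_0_compat; lra. Qed.

Lemma Dnum_pos p x : 0 <= x -> 0 <= Dnum p x.
Proof. intro Hx. unfold Dnum.
  assert (h: (2^2)^p <= (4^2)^p) by (apply pow_incr; lra).
  assert (0 <= (2^2)^p) by (apply pow_le; lra).
  assert (0 <= (6^2)^p) by (apply pow_le; lra).
  assert (0 <= x^2) by (apply pow_le; lra). assert (0 <= x^3) by (apply pow_le; lra).
  assert (0 <= (2^2)^p * x) by (apply Rmult_le_pos; lra).
  assert (0 <= (2^2)^p * x^2) by (apply Rmult_le_pos; lra).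
  assert (0 <= (2^2)^p * x^3) by (apply Rmult_le_pos; lra).
  assert (0 <= (4^2)^p * x) by (apply Rmult_le_pos; lra).
  assert (0 <= (4^2)^p * x^2) by (apply Rmult_le_pos; lra).
  assert (0 <= (4^2)^p * x^3) by (apply Rmult_le_pos; lra).
  assert (0 <= (6^2)^p * x) by (apply Rmult_le_pos; lra).
  lra.
Qed.

Lemma coefN_nonneg n : 0 <= coef Nlist n.
Proof.
  destruct (le_lt_dec n 8) as [h|h]. rewrite coefN_small by lia; lra.
  destruct (parity9 n 9 ltac:(lia)) as [p [->| ->]].
  - rewrite coefN_odd. apply Rdiv_le_0_compat. apply Nnum_pos, pos_INR. apply Nden_pos.
  - rewrite coefN_even; lra.
Qed.

Lemma coefD_nonneg n : 0 <= coef Dlist n.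
Proof.
  destruct (le_lt_dec n 4) as [h|h]. rewrite coefD_small by lia; lra.
  destruct (parity9 n 5 ltac:(lia)) as [p [->| ->]].
  - rewrite coefD_odd. apply Rdiv_le_0_compat. apply Dnum_pos, pos_INR. apply Dden_pos.
  - rewrite coefD_even; lra.
Qed.

Lemma coefD_5 : coef Dlist 5 = 16.
Proof. unfold coef, Dlist. concrete_coef. Qed.

Definition SS (a : nat -> R) (k : R) (M : nat) : R := sum_f_R0 (fun n => a n * k^n) M.

Lemma ps_lim a (k l : R) : is_pseries a k l -> is_lim_seq (SS a k) l.
Proof.
  intro H. unfold is_pseries, is_series in H.
  assert (H': is_lim_seq (sum_n (fun n => scal (pow_n k n) (a n))) l) by exact H.
  eapply is_lim_seq_ext; [|exact H']. intro M. simpl.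
  rewrite sum_n_Reals. unfold SS. apply sum_eq. intros i _.
  unfold scal; simpl; unfold mult; simpl. rewrite pow_n_pow. ring.
Qed.

Lemma sum_mono (u : nat -> R) M d : (forall n, 0 <= u n) -> sum_f_R0 u M <= sum_f_R0 u (d + M).
Proof. intro H. induction d as [|d IH]. simpl; lra. simpl. pose proof (H (S (d+M))). lra. Qed.

Lemma partial_le (u : nat -> R) (l : R) M : (forall n, 0 <= u n) ->
  is_lim_seq (fun N => sum_f_R0 u N) l -> sum_f_R0 u M <= l.
Proof.
  intros Hu Hl.
  assert (Rbar_le (sum_f_R0 u M) l).
  { apply (is_lim_seq_le_loc (fun _ => sum_f_R0 u M) (fun n => sum_f_R0 u n)); [| apply is_lim_seq_const | exact Hl].
    exists M. intros n Hn. replace n with ((n - M) + M)%nat by lia. apply sum_mono, Hu. }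
  exact H.
Qed.

Lemma lim_le (u v : nat -> R) (lu lv : R) : (forall n, u n <= v n) ->
  is_lim_seq (fun N => sum_f_R0 u N) lu -> is_lim_seq (fun N => sum_f_R0 v N) lv -> lu <= lv.
Proof.
  intros H Hu Hv.
  assert (Rbar_le lu lv).
  { apply (is_lim_seq_le (fun N => sum_f_R0 u N) (fun N => sum_f_R0 v N)); auto.
    intro n. apply sum_Rle. auto. }
  exact H0.
Qed.

Lemma lim_scal (u : nat -> R) (l c : R) : is_lim_seq (fun N => sum_f_R0 u N) l ->
  is_lim_seq (fun N => sum_f_R0 (fun n => u n * c) N) (l * c).
Proof.
  intro H. pose proof (is_lim_seq_scal_r _ c _ H) as H1. simpl in H1.
  eapply is_lim_seq_ext; [|exact H1]. intro n. rewrite <- scal_sum. ring.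
Qed.

Definition bN := coef Nlist.

Lemma N_series k : is_lim_seq (SS bN k) (Nk k + 16 * k^7).
Proof. rewrite <- F_N. apply ps_lim, coef_series. Qed.

Lemma D_series k : is_lim_seq (SS (coef Dlist) k) (Dk k).
Proof. rewrite <- F_D. apply ps_lim, coef_series. Qed.

Lemma G_mono k1 k2 : 0 < k1 <= k2 ->
  (Nk k1 + 16 * k1^7) * / k1^9 <= (Nk k2 + 16 * k2^7) * / k2^9.
Proof.
  intros [h1 h2].
  apply (lim_le (fun n => bN n * k1^n * / k1^9) (fun n => bN n * k2^n * / k2^9)).
  - intro n. destruct (le_lt_dec n 8) as [h|h].
    + unfold bN; rewrite coefN_small by lia. lra.
    + replace n with (9 + (n-9))%nat by lia. rewrite !pow_add.
      assert (0 < k1^9) by (apply pow_lt; lra). assert (0 < k2^9) by (apply pow_lt; lra).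
      replace (bN (9 + (n - 9)) * (k1 ^ 9 * k1 ^ (n - 9)) * / k1 ^ 9) with (bN (9 + (n - 9)) * k1 ^ (n - 9)) by (field; lra).
      replace (bN (9 + (n - 9)) * (k2 ^ 9 * k2 ^ (n - 9)) * / k2 ^ 9) with (bN (9 + (n - 9)) * k2 ^ (n - 9)) by (field; lra).
      apply Rmult_le_compat_l. apply coefN_nonneg. apply pow_incr; lra.
  - apply lim_scal, N_series.
  - apply lim_scal, N_series.
Qed.

Lemma D_pos k : 0 < k -> 0 < Dk k.
Proof.
  intro hk. pose proof (partial_le (fun n => coef Dlist n * k^n) (Dk k) 5) as H.
  assert (sum_f_R0 (fun n => coef Dlist n * k^n) 5 = 16 * k^5).
  { cbn [sum_f_R0]. rewrite coefD_5, !coefD_small by lia. ring. }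
  assert (0 < k^5) by (apply pow_lt; lra).
  assert (16 * k^5 <= Dk k); [|lra].
  rewrite <- H0. apply H. intro n. apply Rmult_le_pos. apply coefD_nonneg. apply pow_le; lra.
  apply D_series.
Qed.

Definition Bb : R := 380338/1000000.

Lemma B_partial : 16 * Bb^7 * (1 + 1/1000000) < SS bN Bb 19.
Proof.
  unfold Bb, SS, bN, coef, Nlist. cbn [sum_f_R0 fold_right tc Nat.leb Nat.sub pow Rfact INR]. lra.
Qed.
Definition wl : R := (136726197349/200000000000).
Definition wh : R := (341815493373/500000000000).
Definition Pw (k w : R) : R := (5/128) * k^0 * w^20 + (1/16) * k^0 * w^18 + (-23/128) * k^0 * w^16 + (-1/8) * k^0 * w^14 + (11/32) * k^0 * w^12 + (-11/32) * k^0 * w^8 + (1/8) * k^0 * w^6 + (23/128) * k^0 * w^4 + (-1/16) * k^0 * w^2 + (-5/128) * k^0 * w^0 + (3/64) * k^1 * w^20 + (-1/8) * k^1 * w^18 + (1/64) * k^1 * w^16 + (15/8) * k^1 * w^14 + (-1/16) * k^1 * w^12 + (-7/2) * k^1 * w^10 + (-1/16) * k^1 * w^8 + (15/8) * k^1 * w^6 + (1/64) * k^1 * w^4 + (-1/8) * k^1 * w^2 + (3/64) * k^1 * w^0 + (3/8) * k^2 * w^16 + (1) * k^2 * w^14 + (29/8) * k^2 * w^12 + (-29/8) * k^2 * w^8 + (-1) * k^2 * w^6 + (-3/8) * k^2 * w^4 + (1/4) * k^3 * w^18 + (1/4) * k^3 * w^16 + (5/2) * k^3 * w^14 + (29/4)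 * k^3 * w^12 + (-23/2) * k^3 * w^10 + (29/4) * k^3 * w^8 + (5/2) * k^3 * w^6 + (1/4) * k^3 * w^4 + (1/4) * k^3 * w^2.

Lemma Nk_w k : exp (-k)^10 * Nk k = Pw k (exp (-k)).
Proof.
  unfold Nk, Pw, sinh, cosh. cbv zeta.
  assert (E: exp k = / exp (-k)) by (rewrite exp_Ropp, Rinv_inv; reflexivity).
  rewrite E. assert (exp (-k) <> 0) by (apply Rgt_not_eq, exp_pos). field. auto.
Qed.

Definition Aa : R := 380337/1000000.
Definition Un (n : nat) : R := Aa^n / Rfact n.

Lemma Un_decr : Un_decreasing Un.
Proof.
  intro n. unfold Un. cbn [pow Rfact].
  pose proof (Rfact_pos n). pose proof (pos_INR n).
  assert (0 <= Aa^n) by (apply pow_le; unfold Aa; lra).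
  replace (Aa * Aa ^ n / (Rfact n * (INR n + 1))) with ((Aa^n / Rfact n) * (Aa / (INR n + 1))) by (field; lra).
  rewrite <- (Rmult_1_r (Aa^n / Rfact n)) at 2.
  apply Rmult_le_compat_l. apply Rdiv_le_0_compat; lra.
  apply Rcomplements.Rle_div_l; unfold Aa; lra.
Qed.

Lemma Un_cv0 : Un_cv Un 0.
Proof.
  intros eps He. destruct (cv_speed_pow_fact Aa eps He) as [N HN]. exists N.
  intros n Hn. unfold Un. rewrite <- Rfact_INR. apply HN, Hn.
Qed.

Lemma Un_sum : Un_cv (fun N => sum_f_R0 (tg_alt Un) N) (exp (- Aa)).
Proof.
  apply is_lim_seq_Reals.
  pose proof (ps_lim _ _ _ (is_exp_Reals (- Aa))) as H.
  eapply is_lim_seq_ext; [|exact H]. intro M. unfold SS. apply sum_eq. intros i _.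
  unfold tg_alt, Un. rewrite <- Rfact_INR.
  replace (- Aa) with (-1 * Aa) by ring. rewrite Rpow_mult_distr.
  pose proof (INR_fact_neq_0 i). field. auto.
Qed.

Lemma w_bounds : wl <= exp (- Aa) <= wh.
Proof.
  pose proof (alternated_series_ineq Un (exp (-Aa)) 6 Un_decr Un_cv0 Un_sum) as [H1 H2].
  revert H1 H2. unfold Un, tg_alt, Aa, wl, wh. cbn [sum_f_R0 pow Rfact INR Nat.mul Nat.add].
  intros. split; lra.
Qed.

Lemma NA_neg : Nk Aa < 0.
Proof.
  pose proof w_bounds as [h1 h2].
  set (w := exp (- Aa)) in *.
  assert (hw: 0 < wl) by (unfold wl; lra).
  assert (0 < w^10) by (apply pow_lt; lra).
  assert (Pw Aa w < 0).
  { assert (forall e, wl^e <= w^e <= wh^e) as Hp.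
    { intro e. split; apply pow_incr; lra. }
    pose proof (Hp 2%nat). pose proof (Hp 4%nat). pose proof (Hp 6%nat). pose proof (Hp 8%nat).
    pose proof (Hp 10%nat). pose proof (Hp 12%nat). pose proof (Hp 14%nat). pose proof (Hp 16%nat).
    pose proof (Hp 18%nat). pose proof (Hp 20%nat).
    unfold Pw, Aa. unfold wl, wh in *. lra. }
  rewrite <- Nk_w in H0. fold w in H0.
  destruct (Rlt_or_le (Nk Aa) 0) as [h|h]; [exact h|].
  pose proof (Rmult_le_pos _ _ (Rlt_le _ _ H) h). lra.
Qed.

Lemma Nk_neg k : 0 < k <= Aa -> Nk k < 0.
Proof.
  intros [h1 h2].
  pose proof (G_mono k Aa (conj h1 h2)) as HG.
  set (GA := (Nk Aa + 16 * Aa ^ 7) * / Aa ^ 9) in *.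
  pose proof NA_neg as HN.
  assert (hA : 0 < Aa) by (unfold Aa; lra).
  assert (0 < k^7) by (apply pow_lt; lra).
  assert (E: Nk k = k^7 * (k^2 * ((Nk k + 16 * k ^ 7) * / k ^ 9) - 16)) by (field; lra).
  rewrite E.
  assert (k^2 * ((Nk k + 16 * k ^ 7) * / k ^ 9) - 16 < 0); [|nra].
  assert (k^2 * ((Nk k + 16 * k ^ 7) * / k ^ 9) <= k^2 * GA) by (apply Rmult_le_compat_l; [nra| exact HG]).
  destruct (Rle_or_lt GA 0) as [hg|hg]. nra.
  assert (k^2 * GA <= Aa^2 * GA) by (apply Rmult_le_compat_r; [lra| apply pow_incr; lra]).
  assert (Aa^2 * GA = (Nk Aa + 16 * Aa^7) / Aa^7) by (unfold GA; field; lra).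
  assert (0 < Aa^7) by (apply pow_lt; lra).
  assert ((Nk Aa + 16 * Aa^7) / Aa^7 < 16).
  { apply Rcomplements.Rlt_div_l; lra. }
  lra.
Qed.

Lemma Nk_pos k : Bb <= k -> 0 < Nk k.
Proof.
  intro h2.
  assert (hB : 0 < Bb) by (unfold Bb; lra).
  pose proof (G_mono Bb k (conj hB h2)) as HG.
  set (GB := (Nk Bb + 16 * Bb ^ 7) * / Bb ^ 9) in *.
  assert (HS: SS bN Bb 19 <= Nk Bb + 16 * Bb^7).
  { apply partial_le. intro n. apply Rmult_le_pos. apply coefN_nonneg. apply pow_le; lra. apply N_series. }
  pose proof B_partial as HP.
  assert (0 < Bb^7) by (apply pow_lt; lra).
  assert (HB2 : Bb^2 * GB > 16).
  { assert (Bb^2 * GB = (Nk Bb + 16 * Bb^7) / Bb^7) by (unfold GB; field; lra).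
    rewrite H0. apply (proj1 (Rcomplements.Rlt_div_r 16 _ (Bb^7) H)). lra. }
  assert (0 < k^7) by (apply pow_lt; lra).
  assert (E: Nk k = k^7 * (k^2 * ((Nk k + 16 * k ^ 7) * / k ^ 9) - 16)) by (field; lra).
  rewrite E.
  assert (k^2 * ((Nk k + 16 * k ^ 7) * / k ^ 9) - 16 > 0); [|nra].
  assert (k^2 * GB <= k^2 * ((Nk k + 16 * k ^ 7) * / k ^ 9)) by (apply Rmult_le_compat_l; [nra| exact HG]).
  assert (0 < GB) by nra.
  assert (Bb^2 * GB <= k^2 * GB) by (apply Rmult_le_compat_r; [lra| apply pow_incr; lra]).
  lra.
Qed.

Theorem lemma4p11 (k : R) :
  0 < k -> ~ (380337/1000000 < k < 380338/1000000) -> Gamma0 k <> 0.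
Proof.
  intros hk hI.
  assert (HN: Nk k <> 0).
  { destruct (Rle_or_lt k Aa) as [h|h].
    - apply Rlt_not_eq, Nk_neg; lra.
    - destruct (Rle_or_lt Bb k) as [h'|h'].
      + apply Rgt_not_eq, Nk_pos; lra.
      + exfalso; apply hI; unfold Aa, Bb in *; lra. }
  assert (hs: 0 < sinh k) by (rewrite <- sinh_0; apply sinh_lt; lra).
  assert (hc: 0 < cosh k) by (unfold cosh; pose proof (exp_pos k); pose proof (exp_pos (-k)); lra).
  pose proof (D_pos k hk) as hD.
  assert (0 < k^3) by (apply pow_lt; lra).
  change (k^3 / (8 * cosh k * sinh k * Dk k) * Nk k <> 0).
  apply Rmult_integral_contrapositive_currified; [|exact HN].
  apply Rgt_not_eq. apply Rdiv_lt_0_compat; [lra|].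
  apply Rmult_lt_0_compat; [apply Rmult_lt_0_compat; [apply Rmult_lt_0_compat|]|]; lra.
Qed.
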